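(* Let $\sigma$ be an erasing $k$-block substitution with $w_\epsilon\neq 1^k$ that satisfies the optimality condition. Then $f_\sigma:\mathbb I\to\mathbb I$ is surjective.
   Context: Notation: $\mathbb I=[0,1]$. $\{0,1\}^*$ and $\{0,1\}^\omega$ denote finite and infinite binary words, and $\epsilon$ is the empty word. For a finite or infinite word $w$, set $0.w=\sum_{i=1}^{|w|}w_i2^{-i}$. For $x\in(0,1]$, $\widetilde x\in\{0,1\}^\omega$ denotes the unique infinite binary expansion of $x$ that does not end in $0^\infty$. Fix $k\ge 2$. An erasing $k$-block substitution is a map $\sigma:\{0,1\}^k\to\{0,1\}^*$ with exactly one block $w_\epsilon$ satisfying $\sigma(w_\epsilon)=\epsilon$; all other blocks have nonempty images. The map $\sigma$ acts on infinite words (and on finite words of length a multiple of $k$) by cutting them into consecutive $k$-blocks and concatenating the images of the blocks. The induced interval map $f_\sigma:\mathbb I\to\mathbb I$ is defined by $f_\sigma(x)=0.\sigma(\widetilde x)$ if $x\in(0,1]$ and $\widetilde x\ne w_\epsilon^\infty$, and $f_\sigma(x)=0$ if $x=0$ or $\widetilde x=w_\epsilon^\infty$. Here $\sigma(\widetilde x)$ may be a finite word. Optimality condition (OC): every $w\in\{0,1\}^\omega$ can be written as an infinite concatenation $w=\prod_{i=1}^\infty\sigma(b_i)$ with blocks $b_i\in\{0,1\}^k$ satisfying $\sigma(b_i)\ne\epsilon$. *)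

(* Defs.v *)
From Stdlib Require Import Reals Lra Lia List Arith ClassicalEpsilon.
From Coquelicot Require Import Coquelicot.
Open Scope R_scope.

Definition bit (b : bool) : R := if b then 1 else 0.

(* 0.u for a finite word u: sum_{i=1}^{|u|} u_i 2^{-i} *)
Fixpoint word_val (u : list bool) : R :=
  match u with
  | nil => 0
  | b :: u' => (bit b + word_val u') / 2
  end.

(* 0.w for an infinite word w: sum_{i>=1} w_i 2^{-i} (w indexed from 0) *)
Definition stream_val (w : nat -> bool) : R :=
  Series (fun n => bit (w n) / 2 ^ (S n)).

Fixpoint offset (u : nat -> list bool) (i : nat) : nat :=
  match i with
  | O => O
  | S i' => (offset u i' + length (u i'))%nat
  end.

(* 0.(u_0 u_1 u_2 ...) for the (finite or infinite) concatenation of the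
   finite words u_i: the factor u_i occupies positions offset u i, ... *)
Definition concat_val (u : nat -> list bool) : R :=
  Series (fun i => word_val (u i) / 2 ^ (offset u i)).

Definition block (k : nat) (w : nat -> bool) (i : nat) : list bool :=
  map (fun j => w (i * k + j)%nat) (seq 0 k).

Definition sigma_val (k : nat) (sigma : list bool -> list bool)
  (w : nat -> bool) : R :=
  concat_val (fun i => sigma (block k w i)).

Definition is_tilde_expansion (x : R) (w : nat -> bool) : Prop :=
  (forall N, exists n, (N <= n)%nat /\ w n = true) /\ stream_val w = x.

(* tilde x: the (unique, for x in (0,1]) infinite expansion not ending in 0^oo *)
Definition tilde (x : R) : nat -> bool :=
  epsilon (inhabits (fun _ : nat => false)) (is_tilde_expansion x).

Definition is_periodic_word (k : nat) (u : list bool) (w : nat -> bool) : Prop :=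
  forall n, w n = nth (n mod k) u false.

Definition erasing_block_subst (k : nat) (sigma : list bool -> list bool)
  (weps : list bool) : Prop :=
  (2 <= k)%nat /\ length weps = k /\ sigma weps = nil /\
  (forall b, length b = k -> sigma b = nil -> b = weps).

(* Induced interval map f_sigma (only values on [0,1] matter) *)
Definition f_sigma (k : nat) (sigma : list bool -> list bool)
  (weps : list bool) (x : R) : R :=
  if Req_EM_T x 0 then 0
  else if excluded_middle_informative (is_periodic_word k weps (tilde x)) then 0
  else sigma_val k sigma (tilde x).

Definition optimality_condition (k : nat) (sigma : list bool -> list bool) : Prop :=
  forall w : nat -> bool,
    exists b : nat -> list bool,
      (forall i, length (b i) = k /\ sigma (b i) <> nil) /\
      (forall i j, (j < length (sigma (b i)))%nat ->
         w (offset (fun i' => sigma (b i')) i + j)%nat = nth j (sigma (b i)) false).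

(* Main.v *)
Require Import Defs.
From Stdlib Require Import Reals Lra Lia List Arith ClassicalEpsilon FunctionalExtensionality Classical.
From Coquelicot Require Import Coquelicot.
Open Scope R_scope.

Definition shift (n : nat) (w : nat -> bool) : nat -> bool := fun m => w (n + m)%nat.

Lemma bit_bnd b : 0 <= bit b <= 1.
Proof. destruct b; simpl; lra. Qed.

Lemma geom_ser : is_series (fun n => / 2 ^ S n) 1.
Proof.
  assert (H := is_series_geom (/2)).
  assert (Ha : Rabs (/2) < 1) by (rewrite Rabs_pos_eq; lra).
  specialize (H Ha).
  replace 1 with (/2 * (/ (1 - /2))) by field.
  eapply is_series_ext; [| apply (is_series_scal_l (/2) _ _ H)].
  intro n. simpl. rewrite pow_inv. unfold scal; simpl; unfold mult; simpl. field. apply pow_nonzero; lra.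
Qed.

Lemma terms_bnd w n : 0 <= bit (w n) / 2 ^ S n <= / 2 ^ S n.
Proof.
  pose proof (bit_bnd (w n)). assert (0 < 2 ^ S n) by (apply pow_lt; lra).
  unfold Rdiv. split. apply Rmult_le_pos; [lra| left; apply Rinv_0_lt_compat; lra].
  rewrite <- (Rmult_1_l (/ 2 ^ S n)) at 2. apply Rmult_le_compat_r; [left; apply Rinv_0_lt_compat|]; lra.
Qed.

Lemma ex_sv w : ex_series (fun n => bit (w n) / 2 ^ S n).
Proof.
  apply (@ex_series_le R_AbsRing R_CompleteNormedModule _ (fun n => / 2 ^ S n)).
  - intro n. change (norm (bit (w n) / 2 ^ S n)) with (Rabs (bit (w n) / 2 ^ S n)). pose proof (terms_bnd w n). rewrite Rabs_pos_eq; lra.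
  - eexists; apply geom_ser.
Qed.

Lemma sv_bnd w : 0 <= stream_val w <= 1.
Proof.
  split.
  - unfold stream_val. replace 0 with (Series (fun _ => 0)).
    apply Series_le. intro n. pose proof (terms_bnd w n). lra. apply ex_sv.
    rewrite <- (Series_ext (fun n => 0 * (/ 2 ^ S n))) by (intro; ring).
    rewrite Series_scal_l. ring.
  - unfold stream_val. rewrite <- (is_series_unique _ _ geom_ser).
    apply Series_le. apply terms_bnd. eexists; apply geom_ser.
Qed.

Lemma sv_step w : stream_val w = (bit (w 0%nat) + stream_val (shift 1 w)) / 2.
Proof.
  unfold stream_val. rewrite Series_incr_1 by apply ex_sv.
  rewrite (Series_ext _ (fun n => /2 * (bit (shift 1 w n) / 2 ^ S n))).
  rewrite Series_scal_l. simpl. field.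
  intro n. unfold shift. simpl. field. apply pow_nonzero; lra.
Qed.

Fixpoint pre (w : nat -> bool) (N : nat) : list bool :=
  match N with O => nil | S N' => w O :: pre (shift 1 w) N' end.

Lemma sv_pre w N : stream_val w = word_val (pre w N) + stream_val (shift N w) / 2 ^ N.
Proof.
  revert w; induction N; intro w.
  - simpl. change (shift 0 w) with w. rewrite Rdiv_1_r. lra.
  - rewrite sv_step. rewrite (IHN (shift 1 w)). simpl. change (shift N (shift 1 w)) with (shift (S N) w). field. apply pow_nonzero; lra.
Qed.

Lemma sv_true_pos w : w 0%nat = true -> / 2 <= stream_val w.
Proof.
  intro H. rewrite sv_step, H. pose proof (sv_bnd (shift 1 w)). simpl. lra.
Qed.

Lemma sv_pos w n : w n = true -> 0 < stream_val w.
Proof.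
  intro H. rewrite (sv_pre w n).
  assert (Hp : 0 <= word_val (pre w n)).
  { clear H. revert w; induction n; intro w; simpl. lra. pose proof (bit_bnd (w 0%nat)). specialize (IHn (shift 1 w)). lra. }
  assert (/2 <= stream_val (shift n w)) by (apply sv_true_pos; unfold shift; rewrite Nat.add_0_r; auto).
  assert (0 < 2 ^ n) by (apply pow_lt; lra).
  assert (0 < stream_val (shift n w) / 2 ^ n) by (apply Rdiv_lt_0_compat; lra). lra.
Qed.

Definition inf_true (w : nat -> bool) := forall N, exists n, (N <= n)%nat /\ w n = true.

Lemma inf_true_shift w m : inf_true w -> inf_true (shift m w).
Proof.
  intros H N. destruct (H (m + N)%nat) as [n [Hn Hw]]. exists (n - m)%nat. split. lia.
  unfold shift. replace (m + (n - m))%nat with n by lia. auto.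
Qed.

Lemma sv_gen a b : inf_true a -> a 0%nat = true -> b 0%nat = false -> stream_val a <> stream_val b.
Proof.
  intros Ha Ha0 Hb0. rewrite (sv_step a), (sv_step b), Ha0, Hb0.
  destruct (Ha 1%nat) as [m [Hm Ham]].
  assert (0 < stream_val (shift 1 a)).
  { apply (sv_pos _ (m - 1)). unfold shift. replace (1 + (m-1))%nat with m by lia. auto. }
  pose proof (sv_bnd (shift 1 b)). simpl. lra.
Qed.

Lemma sv_base w w' : inf_true w -> inf_true w' -> w 0%nat <> w' 0%nat -> stream_val w <> stream_val w'.
Proof.
  intros H H' Hd.
  destruct (w 0%nat) eqn:E1, (w' 0%nat) eqn:E2; try congruence.
  + apply sv_gen; auto.
  + intro Heq. symmetry in Heq. revert Heq. apply sv_gen; auto.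
Qed.

Lemma sv_inj_aux n : forall w w', inf_true w -> inf_true w' -> w n <> w' n -> stream_val w <> stream_val w'.
Proof.
  induction n; intros w w' H H' Hd.
  - apply sv_base; auto.
  - destruct (Bool.bool_dec (w 0%nat) (w' 0%nat)) as [E|E].
    + rewrite (sv_step w), (sv_step w'), E. intro Heq.
      apply (IHn (shift 1 w) (shift 1 w')); try apply inf_true_shift; auto. lra.
    + apply sv_base; auto.
Qed.

Lemma sv_inj w w' : inf_true w -> inf_true w' -> stream_val w = stream_val w' -> w = w'.
Proof.
  intros H H' E. apply functional_extensionality. intro n.
  destruct (Bool.bool_dec (w n) (w' n)); auto. exfalso. apply (sv_inj_aux n w w'); auto.
Qed.

Lemma small_zero a : (forall n, Rabs a <= / 2 ^ n) -> a = 0.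
Proof.
  intro H. destruct (Req_dec a 0) as [|Hne]; auto. exfalso.
  assert (Hp : 0 < Rabs a) by (apply Rabs_pos_lt; auto).
  destruct (pow_lt_1_zero (/2) ltac:(rewrite Rabs_pos_eq; lra) (Rabs a) Hp) as [N HN].
  specialize (HN N (le_n _)). specialize (H N). rewrite <- pow_inv in H.
  rewrite Rabs_pos_eq in HN by (apply pow_le; lra). lra.
Qed.

Definition dig (r : R) : bool := if Rle_dec 1 (2 * r) then true else false.
Fixpoint gd (r : R) (n : nat) : bool :=
  match n with O => dig r | S n' => gd (2 * r - bit (dig r)) n' end.

Lemma gd_close n : forall r, 0 <= r <= 1 -> Rabs (stream_val (gd r) - r) <= / 2 ^ n.
Proof.
  induction n; intros r Hr.
  - simpl. pose proof (sv_bnd (gd r)). rewrite Rinv_1. apply Rabs_le. lra.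
  - rewrite sv_step. change (shift 1 (gd r)) with (gd (2 * r - bit (dig r))).
    change (gd r 0%nat) with (dig r).
    assert (Hr' : 0 <= 2 * r - bit (dig r) <= 1).
    { unfold dig. destruct (Rle_dec 1 (2*r)); simpl; lra. }
    specialize (IHn _ Hr').
    replace ((bit (dig r) + stream_val (gd (2 * r - bit (dig r)))) / 2 - r)
      with ((stream_val (gd (2 * r - bit (dig r))) - (2 * r - bit (dig r))) / 2) by field.
    unfold Rdiv. rewrite Rabs_mult. rewrite (Rabs_pos_eq (/2)) by lra.
    simpl. rewrite Rinv_mult. rewrite (Rmult_comm (/2)). apply Rmult_le_compat_r; lra.
Qed.

Lemma gd_val r : 0 <= r <= 1 -> stream_val (gd r) = r.
Proof.
  intro Hr. assert (stream_val (gd r) - r = 0). apply small_zero. intro n. apply gd_close; auto. lra.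
Qed.

Lemma word_val_app u v : word_val (u ++ v) = word_val u + word_val v / 2 ^ length u.
Proof.
  induction u; simpl. field. rewrite IHu. field. apply pow_nonzero; lra.
Qed.

Fixpoint concI (u : nat -> list bool) (I : nat) : list bool :=
  match I with O => nil | S I' => concI u I' ++ u I' end.

Lemma concI_len u I : length (concI u I) = offset u I.
Proof. induction I; simpl; auto. rewrite length_app, IHI. auto. Qed.

Lemma pre_add w a b : pre w (a + b) = pre w a ++ pre (shift a w) b.
Proof.
  revert w; induction a; intro w; simpl. reflexivity.
  rewrite IHa. reflexivity.
Qed.

Lemma pre_match x : forall w, (forall j, (j < length x)%nat -> w j = nth j x false) -> pre w (length x) = x.
Proof.
  induction x; intros w H; simpl. auto.
  rewrite (H 0%nat) by (simpl; lia). f_equal. apply IHx. intros j Hj.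
  unfold shift. apply (H (S j)). simpl; lia.
Qed.

Lemma concI_pre u w : (forall i j, (j < length (u i))%nat -> w (offset u i + j)%nat = nth j (u i) false) ->
  forall I, concI u I = pre w (offset u I).
Proof.
  intros H I. induction I; simpl. auto.
  rewrite IHI, pre_add. f_equal. symmetry. apply pre_match. intros j Hj. unfold shift. apply H; auto.
Qed.

Lemma offset_mono u i j : (i <= j)%nat -> (offset u i <= offset u j)%nat.
Proof. induction 1; simpl; lia. Qed.

Lemma psum u I : sum_n (fun i => word_val (u i) / 2 ^ offset u i) I = word_val (concI u (S I)).
Proof.
  induction I.
  - rewrite sum_O. simpl. field.
  - rewrite sum_Sn, IHI. change (concI u (S (S I))) with (concI u (S I) ++ u (S I)).
    rewrite word_val_app, concI_len. reflexivity.
Qed.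

Lemma concat_lemma u w : (forall i j, (j < length (u i))%nat -> w (offset u i + j)%nat = nth j (u i) false) ->
  (forall N, exists I, (N <= offset u I)%nat) -> concat_val u = stream_val w.
Proof.
  intros Hm Hu. unfold concat_val. apply is_series_unique.
  change (is_lim_seq (sum_n (fun i => word_val (u i) / 2 ^ offset u i)) (stream_val w)).
  apply is_lim_seq_spec. intro eps.
  destruct (pow_lt_1_zero (/2) ltac:(rewrite Rabs_pos_eq; lra) eps (cond_pos eps)) as [N HN].
  specialize (HN N (le_n _)). rewrite Rabs_pos_eq in HN by (apply pow_le; lra).
  destruct (Hu N) as [I0 HI0]. exists I0. intros n Hn.
  rewrite psum, (concI_pre u w Hm).
  set (M := offset u (S n)).
  assert (HM : (N <= M)%nat). { unfold M. pose proof (offset_mono u I0 (S n) ltac:(lia)). lia. }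
  rewrite (sv_pre w M). pose proof (sv_bnd (shift M w)).
  assert (0 < 2 ^ M) by (apply pow_lt; lra).
  assert (/ 2 ^ M <= (/2) ^ N).
  { rewrite pow_inv. apply Rinv_le_contravar. apply pow_lt; lra. apply Rle_pow; lra || lia. }
  rewrite Rabs_minus_sym, Rabs_pos_eq.
  - replace (word_val (pre w M) + stream_val (shift M w) / 2 ^ M - word_val (pre w M))
      with (stream_val (shift M w) * / 2 ^ M) by (unfold Rdiv; ring).
    assert (stream_val (shift M w) * / 2 ^ M <= / 2 ^ M).
    { rewrite <- (Rmult_1_l (/ 2 ^ M)) at 2. apply Rmult_le_compat_r. left; apply Rinv_0_lt_compat; lra. lra. }
    lra.
  - assert (0 <= stream_val (shift M w) / 2 ^ M) by (apply Rdiv_le_0_compat; lra). lra.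
Qed.

Lemma map_nth_seq0 (l : list bool) : map (fun j => nth j l false) (seq 0 (length l)) = l.
Proof.
  induction l; simpl; auto. f_equal. rewrite <- seq_shift, map_map. simpl. auto.
Qed.

Lemma allfalse l : (forall p, (p < length l)%nat -> nth p l false = false) -> l = repeat false (length l).
Proof.
  induction l; intro H; simpl; auto. pose proof (H 0%nat ltac:(simpl; lia)) as H0. simpl in H0. rewrite H0. f_equal. apply IHl.
  intros p Hp. apply (H (S p)). simpl; lia.
Qed.

Lemma some_true l l' : length l = length l' -> l <> l' ->
  exists p, (p < length l)%nat /\ (nth p l false = true \/ nth p l' false = true).
Proof.
  intros Hl Hne. destruct (classic (exists p, (p < length l)%nat /\ (nth p l false = true \/ nth p l' false = true))) as [|Hn]; auto.
  exfalso. apply Hne.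
  assert (Hf : forall p, (p < length l)%nat -> nth p l false = false /\ nth p l' false = false).
  { intros p Hp. destruct (nth p l false) eqn:E1, (nth p l' false) eqn:E2; auto; exfalso; apply Hn; exists p; auto. }
  rewrite (allfalse l), (allfalse l'). congruence.
  intros p Hp. apply Hf; lia. intros p Hp. apply Hf; lia.
Qed.

Lemma vk_div k i p : (p < k)%nat -> ((i * k + p) mod k = p /\ (i * k + p) / k = i)%nat.
Proof.
  intro Hp. split.
  - rewrite Nat.add_comm, Nat.Div0.mod_add. apply Nat.mod_small; auto.
  - rewrite Nat.div_add_l by lia. rewrite Nat.div_small by auto. lia.
Qed.

Theorem lemma3p1 (k : nat) (sigma : list bool -> list bool) (weps : list bool) :
  erasing_block_subst k sigma weps ->
  weps <> repeat true k ->
  optimality_condition k sigma ->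
  forall y : R, 0 <= y <= 1 ->
    exists x : R, 0 <= x <= 1 /\ f_sigma k sigma weps x = y.
Proof.
  intros [Hk [Hlen [Hnil Huniq]]] _ OC y Hy.
  destruct (Req_dec y 0) as [Hy0|Hy0].
  { exists 0. split. lra. unfold f_sigma. destruct (Req_EM_T 0 0); [auto|congruence]. }
  set (w := gd y). assert (Hw : stream_val w = y) by (apply gd_val; auto).
  destruct (OC w) as [b [Hb Hm]].
  set (u := fun i => sigma (b i)).
  set (c := fun i => if Nat.even i then b (Nat.div2 i) else weps).
  set (u' := fun i => sigma (c i)).
  assert (Hc_ev : forall m, c (2 * m)%nat = b m).
  { intro m. unfold c. rewrite Nat.even_even, Nat.div2_double. auto. }
  assert (Hc_od : forall m, c (2 * m + 1)%nat = weps).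
  { intro m. unfold c. rewrite Nat.even_odd. auto. }
  assert (Hclen : forall i, length (c i) = k).
  { intro i. unfold c. destruct (Nat.even i). apply Hb. auto. }
  assert (Hoff : forall m, offset u' (2 * m) = offset u m).
  { induction m. reflexivity.
    assert (OS : forall f n, offset f (S n) = (offset f n + length (f n))%nat) by reflexivity.
    replace (2 * S m)%nat with (S (S (2 * m))) by lia. rewrite !OS, IHm.
    replace (S (2 * m)) with (2 * m + 1)%nat by lia. unfold u'.
    rewrite Hc_ev, Hc_od, Hnil. simpl. unfold u. lia. }
  assert (Hm' : forall i j, (j < length (u' i))%nat -> w (offset u' i + j)%nat = nth j (u' i) false).
  { intros i j Hj. destruct (Nat.Even_or_Odd i) as [[m Hi]|[m Hi]]; subst i.
    - rewrite Hoff. unfold u' in *. rewrite Hc_ev in *. apply Hm. auto.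
    - unfold u' in Hj. rewrite Hc_od, Hnil in Hj. simpl in Hj. lia. }
  assert (Hunb : forall N, exists I, (N <= offset u' I)%nat).
  { intro N. exists (2 * N)%nat. rewrite Hoff. clear -Hb. induction N. simpl; lia.
    change (offset u (S N)) with (offset u N + length (u N))%nat.
    assert (1 <= length (u N))%nat.
    { destruct (Hb N) as [_ Hne]. unfold u. destruct (sigma (b N)); [congruence|simpl; lia]. }
    lia. }
  assert (Hval : concat_val u' = y) by (rewrite <- Hw; apply concat_lemma; auto).
  set (v := fun n : nat => nth (n mod k)%nat (c (n / k)%nat) false).
  assert (Hvk : forall i p, (p < k)%nat -> v (i * k + p)%nat = nth p (c i) false).
  { intros i p Hp. unfold v. destruct (vk_div k i p Hp) as [E1 E2]. rewrite E1, E2. auto. }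
  assert (Hblk : forall i, block k v i = c i).
  { intro i. unfold block. rewrite <- (map_nth_seq0 (c i)). rewrite Hclen.
    apply map_ext_in. intros j Hj. apply in_seq in Hj. apply Hvk. lia. }
  assert (Hinf : inf_true v).
  { intro N. destruct (Hb N) as [HbN HsN].
    assert (Hne : b N <> weps) by (intro E; rewrite E in HsN; auto).
    destruct (some_true (b N) weps ltac:(rewrite HbN; auto) Hne) as [p [Hp [Ht|Ht]]]; rewrite HbN in Hp.
    - exists (2 * N * k + p)%nat. split. nia. rewrite Hvk by auto. rewrite Hc_ev. auto.
    - exists ((2 * N + 1) * k + p)%nat. split. nia. rewrite Hvk by auto. rewrite Hc_od. auto. }
  set (x := stream_val v).
  assert (Htil : tilde x = v).
  { assert (Hx : is_tilde_expansion x (tilde x)).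
    { unfold tilde. apply epsilon_spec. exists v. split; auto. }
    destruct Hx as [Hx1 Hx2]. apply sv_inj; auto. }
  assert (Hxpos : 0 < x).
  { destruct (Hinf 0%nat) as [n [_ Hn]]. apply (sv_pos v n Hn). }
  exists x. split. apply sv_bnd.
  unfold f_sigma. destruct (Req_EM_T x 0) as [E|_]. lra.
  destruct (excluded_middle_informative (is_periodic_word k weps (tilde x))) as [Hper|_].
  - exfalso. rewrite Htil in Hper.
    assert (block k v 0 = weps).
    { unfold block. rewrite <- (map_nth_seq0 weps). rewrite Hlen.
      apply map_ext_in. intros j Hj. apply in_seq in Hj. rewrite Hper. f_equal.
      simpl. apply Nat.mod_small. lia. }
    rewrite Hblk in H. change (c 0%nat) with (b 0%nat) in H. destruct (Hb 0%nat) as [_ Hs]. rewrite H in Hs. auto.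
  - rewrite Htil. unfold sigma_val.
    replace (fun i => sigma (block k v i)) with u'. auto.
    apply functional_extensionality. intro i. unfold u'. rewrite Hblk. auto.
Qed.
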